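(* Consider the robust Bayesian persuasion setting described in the context, for any fixed class $\mathcal{U}$ of Receiver utilities. Then $\mathrm{Apr}\le \frac{1}{\mathrm{Reg}}-1$ (with $\frac10$ interpreted as $+\infty$).
   Context: Setting: a finite state space $\Omega$ and a publicly known prior $\mu\in\Delta(\Omega)$ with full support. A signaling scheme is a stochastic map $\pi$ from $\Omega$ to a (finite or infinite) signal set $S$; Sender commits to $\pi$, the state $\omega\sim\mu$ is drawn, a signal $s\sim\pi(\omega)$ is sent, and Receiver forms the Bayesian posterior $p(s)\in\Delta(\Omega)$. Receiver has actions $\{0,1\}$ and utility $u_r:\Omega\times\{0,1\}\to\mathbb{R}$ with $u_r(\omega,0)=0$; Receiver adopts (action 1) at posterior $p$ iff $\mathbb{E}_{\omega'\sim p}[u_r(\omega',1)]\ge0$. Sender's utility is $u(\pi,u_r)=\Pr_s[\text{Receiver adopts at }p(s)]\in[0,1]$, and $u^*(u_r)=\sup_\pi u(\pi,u_r)$. For a class $\mathcal{U}$ of Receiver utilities: $\mathrm{Reg}=\inf_\pi\sup_{u_r\in\mathcal{U}}\{u^*(u_r)-u(\pi,u_r)\}$, and $\mathrm{Apr}=\sup_\pi\inf_{u_r\in\mathcal{U}}\frac{u(\pi,u_r)}{u^*(u_r)}$, where the ratio is defined to be $1$ when $u^*(u_r)=0$. *)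

(* Defs.v *)
From HB Require Import structures.
From mathcomp Require Import all_boot all_order all_algebra.
From mathcomp Require Import all_classical all_reals all_analysis.
Set Implicit Arguments. Unset Strict Implicit. Unset Printing Implicit Defensive.
Import Order.TTheory GRing.Theory Num.Theory.
Local Open Scope classical_set_scope.
Local Open Scope ring_scope.

(* A signaling scheme pi : Omega -> Delta(S) on an arbitrary (finite or
   infinite) measurable signal space S, given by the densities
   f w = d pi(w) / d nu with respect to a reference measure nu on S.
   (Every Markov kernel from a finite Omega has this form, e.g. with
   nu = sum_w pi(w).)  pi(w)(A) = \int_A f w dnu. *)
Record scheme (R : realType) (Omega : finType) := Scheme {
  sch_disp : measure_display;
  sch_S : measurableType sch_disp;
  sch_nu : {measure set sch_S -> \bar R};
  sch_f : Omega -> sch_S -> R;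
  sch_f_ge0 : forall w s, 0 <= sch_f w s;
  sch_f_meas : forall w, measurable_fun setT (sch_f w);
  sch_f_int1 : forall w, (\int[sch_nu]_s (sch_f w s)%:E = 1)%E }.

Arguments sch_S {R Omega} _.
Arguments sch_nu {R Omega} _.
Arguments sch_f {R Omega} _ _ _.

Section Persuasion.
Local Unset Implicit Arguments.
Variables (R : realType) (Omega : finType).

(* density (w.r.t. nu) of the marginal law of the signal s, under prior mu *)
Definition sig_density (mu : Omega -> R) (pi : scheme R Omega)
  (s : sch_S pi) : R := \sum_(w : Omega) mu w * sch_f pi w s.

Definition posterior (mu : Omega -> R) (pi : scheme R Omega)
  (s : sch_S pi) (w : Omega) : R :=
  mu w * sch_f pi w s / sig_density mu pi s.

(* Receiver utility u_r : Omega -> {0,1} -> R  (false = action 0, true = action 1);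
   Receiver adopts at posterior p iff E_{w~p}[u_r(w,1)] >= 0 *)
Definition adopts (u : Omega -> bool -> R) (p : Omega -> R) : bool :=
  0 <= \sum_(w : Omega) p w * u w true.

Definition sender_util (mu : Omega -> R) (pi : scheme R Omega)
  (u : Omega -> bool -> R) : \bar R :=
  (\int[sch_nu pi]_s
     (sig_density mu pi s * (adopts u (posterior mu pi s))%:R)%:E)%E.

Definition ustar (mu : Omega -> R) (u : Omega -> bool -> R) : \bar R :=
  ereal_sup [set x | exists pi : scheme R Omega, sender_util mu pi u = x].

Definition regret_of (mu : Omega -> R) (U : set (Omega -> bool -> R))
  (pi : scheme R Omega) : \bar R :=
  ereal_sup [set (ustar mu u - sender_util mu pi u)%E | u in U].

Definition Reg (mu : Omega -> R) (U : set (Omega -> bool -> R)) : \bar R :=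
  ereal_inf [set x | exists pi : scheme R Omega, regret_of mu U pi = x].

Definition ratio (mu : Omega -> R) (pi : scheme R Omega)
  (u : Omega -> bool -> R) : \bar R :=
  if ustar mu u == 0%E then 1%E
  else (fine (sender_util mu pi u) / fine (ustar mu u))%:E.

Definition Apr (mu : Omega -> R) (U : set (Omega -> bool -> R)) : \bar R :=
  ereal_sup [set x | exists pi : scheme R Omega,
                      ereal_inf [set ratio mu pi u | u in U] = x].

End Persuasion.

Arguments sig_density {R Omega}.
Arguments posterior {R Omega}.
Arguments adopts {R Omega}.
Arguments sender_util {R Omega}.
Arguments ustar {R Omega}.
Arguments regret_of {R Omega}.
Arguments Reg {R Omega}.
Arguments ratio {R Omega}.
Arguments Apr {R Omega}.

(* Main.v *)
Require Import Defs.
From HB Require Import structures.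
From mathcomp Require Import all_boot all_order all_algebra.
From mathcomp Require Import all_classical all_reals all_analysis.
From mathcomp Require Import lra.
Import Order.TTheory GRing.Theory Num.Theory.
Local Open Scope classical_set_scope.
Local Open Scope ring_scope.

Section P.
Variables (R : realType) (Omega : finType) (mu : Omega -> R).
Hypothesis mu_pos : forall w, 0 < mu w.
Hypothesis mu_sum : \sum_(w : Omega) mu w = 1.
Implicit Types (pi : scheme R Omega) (u : Omega -> bool -> R).

Lemma int_le d (T : measurableType d) (nu : {measure set T -> \bar R})
  (f g : T -> \bar R) : (forall x, (0 <= f x)%E) -> (forall x, (f x <= g x)%E) ->
  (\int[nu]_x f x <= \int[nu]_x g x)%E.
Proof.
move=> f0 fg.
have g0 : forall x, (0 <= g x)%E by move=> x; exact: le_trans (f0 x) (fg x).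
rewrite (ge0_integralTE _ f0) (ge0_integralTE _ g0).
apply: le_ereal_sup => _ [h hf <-]; exists h => //= x.
exact: le_trans (hf x) (fg x).
Qed.

Lemma sig_ge0 (pi : scheme R Omega) s : 0 <= sig_density mu pi s.
Proof.
rewrite /sig_density; apply: sumr_ge0 => w _.
by rewrite mulr_ge0 ?sch_f_ge0 // ltW.
Qed.

Lemma int_sig (pi : scheme R Omega) :
  (\int[sch_nu pi]_s (sig_density mu pi s)%:E = 1)%E.
Proof.
rewrite /sig_density.
under eq_integral do rewrite -sumEFin.
rewrite ge0_integral_sum //; last first.
- by move=> w s _; rewrite lee_fin mulr_ge0 ?sch_f_ge0 // ltW.
- move=> w; apply/measurable_realfun.measurable_EFinP.
  apply: measurable_realfun.measurable_funM => //; exact: sch_f_meas.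
under eq_bigr => w _.
  under eq_integral do rewrite EFinM.
  rewrite ge0_integralZl_EFin //; last 3 first.
  - by move=> s _; rewrite lee_fin sch_f_ge0.
  - by apply/measurable_realfun.measurable_EFinP; exact: sch_f_meas.
  - exact: ltW.
  rewrite sch_f_int1 mule1.
  over.
by rewrite sumEFin mu_sum.
Qed.

Lemma util_ge0 pi u : (0 <= sender_util mu pi u)%E.
Proof.
apply: integral_ge0 => s _; rewrite lee_fin mulr_ge0 ?sig_ge0 //.
Qed.

Lemma util_le1 pi u : (sender_util mu pi u <= 1)%E.
Proof.
rewrite -(int_sig pi); apply: int_le.
  by move=> s; rewrite lee_fin mulr_ge0 ?sig_ge0.
move=> s; rewrite lee_fin; case: (adopts _ _) => /=.
  by rewrite mulr1.
by rewrite mulr0 sig_ge0.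
Qed.

Lemma util_le_ustar pi u : (sender_util mu pi u <= ustar mu u)%E.
Proof. by apply: ereal_sup_ubound; exists pi. Qed.

Lemma ustar_le1 u : (ustar mu u <= 1)%E.
Proof. by apply: ge_ereal_sup => _ [pi <-]; exact: util_le1. Qed.

Definition pi0 : scheme R Omega.
refine (@Scheme R Omega _ R (\d_(0:R)) (fun _ _ => 1) _ _ _).
- by move=> *; exact: ler01.
- by move=> w; exact: measurable_cst.
- move=> w; rewrite integral_cst // /= diracE in_setT mule1 //.
Defined.

Lemma ustar_ge0 u : (0 <= ustar mu u)%E.
Proof. exact: le_trans (util_ge0 pi0 u) (util_le_ustar pi0 u). Qed.

Lemma ratio_ge0 pi u : (0 <= Defs.ratio mu pi u)%E.
Proof.
rewrite /Defs.ratio; case: ifP => // _; rewrite lee_fin divr_ge0 //.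
  exact: fine_ge0 (util_ge0 pi u).
exact: fine_ge0 (ustar_ge0 u).
Qed.

Lemma ratio_fin pi u : Defs.ratio mu pi u \is a fin_num.
Proof. by rewrite /Defs.ratio; case: ifP. Qed.

Lemma util_fin pi u : sender_util mu pi u = (fine (sender_util mu pi u))%:E.
Proof.
rewrite fineK // ge0_fin_numE ?util_ge0 //.
exact: le_lt_trans (util_le1 pi u) (ltey _).
Qed.

Lemma ustar_fin u : ustar mu u = (fine (ustar mu u))%:E.
Proof.
rewrite fineK // ge0_fin_numE ?ustar_ge0 //.
exact: le_lt_trans (ustar_le1 u) (ltey _).
Qed.

Variable U : set (Omega -> bool -> R).
Hypothesis U_nonempty : U !=set0.

Lemma regret_ge0 pi : (0 <= regret_of mu U pi)%E.
Proof.
case: U_nonempty => u Uu.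
apply: le_trans (ereal_sup_ubound _); last by exists u.
by rewrite subre_ge0 ?util_le_ustar // ustar_fin.
Qed.

Lemma regret_bound pi a : (forall u, U u -> (a%:E <= Defs.ratio mu pi u)%E) ->
  (regret_of mu U pi <= (1 - a)%:E)%E.
Proof.
move=> H; apply: ge_ereal_sup => _ [u Uu <-].
have := H u Uu; rewrite /Defs.ratio.
have le := util_le_ustar pi u.
have g0 := util_ge0 pi u.
have s1 := ustar_le1 u.
rewrite (util_fin pi u) (ustar_fin u) in le g0 s1 *.
move: (fine (sender_util mu pi u)) (fine (ustar mu u)) le g0 s1 => t s.
rewrite !lee_fin => le g0 s1.
case: ifP => [/eqP [] s0 | /negbT s0].
  rewrite lee_fin => a1; lra.
rewrite /= lee_fin => hr.
have sp : 0 < s.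
  rewrite lt_def (le_trans g0 le) andbT; apply: contraNneq s0 => ->; done.
rewrite ler_pdivlMr // in hr.
have a1 : a <= 1 by nra.
nra.
Qed.

End P.

Arguments util_fin {R Omega mu}. Arguments ustar_fin {R Omega mu}.
Arguments util_ge0 {R Omega mu}. Arguments ustar_le1 {R Omega mu}.
Arguments regret_ge0 {R Omega mu}. Arguments ratio_ge0 {R Omega mu}.
Arguments regret_bound {R Omega mu}. Arguments ratio_fin {R Omega}.

Theorem proposition4 (R : realType) (Omega : finType) (mu : Omega -> R)
  (U : set (Omega -> bool -> R))
  (mu_pos : forall w, 0 < mu w) (mu_sum : \sum_(w : Omega) mu w = 1)
  (U_nonempty : U !=set0)
  (U_act0 : forall u, U u -> forall w, u w false = 0) :
  Reg mu U = 0%E \/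
  (exists r : R, Reg mu U = r%:E /\ 0 < r /\ (Apr mu U <= (r^-1 - 1)%:E)%E).
Proof.
have R0 : (0 <= Reg mu U)%E.
  by apply: le_ereal_inf_tmp => _ [pi <-]; exact: (regret_ge0 mu_pos mu_sum U U_nonempty).
have R1 : (Reg mu U <= 1)%E.
  apply: ge_ereal_inf; exists (regret_of mu U (pi0 R Omega)); first by exists (pi0 R Omega).
  apply: ge_ereal_sup => _ [u Uu <-].
  rewrite (util_fin mu_pos mu_sum) (ustar_fin mu_pos mu_sum) -EFinB lee_fin.
  have := ustar_le1 mu_pos mu_sum u; have := util_ge0 mu_pos (pi0 R Omega) u.
  rewrite (util_fin mu_pos mu_sum) (ustar_fin mu_pos mu_sum) !lee_fin.
  lra.
have Rle : forall pi, (Reg mu U <= regret_of mu U pi)%E.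
  by move=> pi; apply: ereal_inf_lbound; exists pi.
move: R0 R1 Rle; case: (Reg mu U) => [r| |] //= r0 r1 Rle.
have [->|rn0] := eqVneq r 0; first by left.
right; exists r; split => //.
have rp : 0 < r by rewrite lt_def rn0 -lee_fin.
split => //.
apply: ge_ereal_sup => _ [pi <-].
case: U_nonempty => u0 Uu0.
set I := ereal_inf _.
have I0 : (0 <= I)%E.
  by apply: le_ereal_inf_tmp => _ [u Uu <-]; exact: (ratio_ge0 mu_pos).
have Iu0 : (I <= Defs.ratio mu pi u0)%E by apply: ereal_inf_lbound; exists u0.
have Hlb : forall u, U u -> (I <= Defs.ratio mu pi u)%E.
  by move=> u Uu; apply: ereal_inf_lbound; exists u.
have := ratio_fin mu pi u0.
move: I0 Iu0 Hlb; case: I => [a| |] //=; last first.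
  move=> _ Iu _; move: Iu; case: (Defs.ratio mu pi u0) => // r2; rewrite leye_eq.
move=> a0 _ H _.
have := regret_bound mu_pos mu_sum U pi a H.
move=> /(le_trans (Rle pi)); rewrite !lee_fin => hr.
have iq : r * r^-1 = 1 by rewrite mulfV.
have ip : 0 < r^-1 by rewrite invr_gt0.
nra.
Qed.
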